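(* Let $a_1,\dots,a_k>0$, let $K,L>0$, and let $Q_+=\{u\in\mathbb{C}:\mathrm{Re}\,u<-L,\ \mathrm{Im}\,u>-K\}$, $Q_-=\{u\in\mathbb{C}:\mathrm{Re}\,u<-L,\ \mathrm{Im}\,u<K\}$. Let $f$ be holomorphic on $Q_\pm$ with $|f(u)|\le M|u|^{-A}$ on $Q_\pm$ for some constant $M$, and assume $A>k$. Then the series $$F_\pm(u)=(\mp1)^k\sum_{m_1,\dots,m_k>0}f\Big(u\pm2\pi i(a_1m_1+\cdots+a_km_k)\mp\pi i(a_1+\cdots+a_k)\Big)$$ converges and solves on $Q_\pm$ the difference equation $\Delta_{a_1,\dots,a_k}F_\pm=f$. Moreover, for every $B<A-k$ there is a constant $M_{A-k-B}$ such that $|F_\pm(u)|\le M_{A-k-B}|u|^{-B}$ on $Q_\pm$.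
   Context: $\Delta_af(u)=f(u+ia\pi)-f(u-ia\pi)$ and $\Delta_{a_1,\dots,a_k}=\Delta_{a_1}\circ\cdots\circ\Delta_{a_k}$. *)

(* Defs.v *)
From HB Require Import structures.
From mathcomp Require Import all_boot all_order all_algebra.
From mathcomp Require Import complex.
From mathcomp Require Import all_classical all_reals all_analysis.
Set Implicit Arguments. Unset Strict Implicit. Unset Printing Implicit Defensive.
Import Order.TTheory GRing.Theory Num.Theory.
Import numFieldNormedType.Exports.
Import numFieldTopology.Exports.
Local Open Scope ring_scope.

(* R[i] is a numClosedFieldType; equip it with its norm topology and its
   structure of normed module over itself (as mathcomp-analysis does for any
   abstract numFieldType), so that limits and complex derivatives make sense. *)
HB.instance Definition _ (R : rcfType) := PseudoPointedMetric.copy R[i] (R[i])^o.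
HB.instance Definition _ (R : rcfType) := GRing.ComAlgebra.copy R[i] (R[i])^o.
HB.instance Definition _ (R : rcfType) := Vector.copy R[i] (R[i])^o.
HB.instance Definition _ (R : rcfType) := NormedModule.copy R[i] (R[i])^o.

Local Open Scope complex_scope.

Definition cmod (R : realType) (z : R[i]) : R := Normc.normc z.

Definition Delta (R : realType) (a : R) (F : R[i] -> R[i]) (u : R[i]) : R[i] :=
  F (u + 'i * (a * pi)%:C) - F (u - 'i * (a * pi)%:C).

Definition Deltas (R : realType) (a : seq R) (F : R[i] -> R[i]) : R[i] -> R[i] :=
  foldr (@Delta R) F a.

Definition sgn (R : realType) (s : bool) : R := if s then 1 else -1.

(* Q_+ (s = true) and Q_- (s = false) *)
Definition Qpm (R : realType) (s : bool) (K L : R) (u : R[i]) : Prop :=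
  @complex.Re R u < - L /\ (if s then - K < @complex.Im R u else @complex.Im R u < K).

(* the general term of the series, at multi-index m = (m_1,...,m_k), m_j >= 1 *)
Definition term (R : realType) (k : nat) (a : 'I_k -> R) (s : bool)
    (f : R[i] -> R[i]) (u : R[i]) (m : 'I_k -> nat) : R[i] :=
  ((- sgn R s) ^+ k)%:C *
  f (u + ((sgn R s) * 2 * pi * \sum_(j < k) a j * (m j)%:R)%:C * 'i
       - ((sgn R s) * pi * \sum_(j < k) a j)%:C * 'i).

(* partial sum over the box  1 <= m_j <= N  for all j *)
Definition boxsum (R : realType) (k : nat) (g : ('I_k -> nat) -> R[i]) (N : nat)
  : R[i] :=
  \sum_(m : {ffun 'I_k -> 'I_N}) g (fun j => (m j : nat).+1).

Definition boxsum_abs (R : realType) (k : nat) (g : ('I_k -> nat) -> R[i])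
  (N : nat) : R :=
  \sum_(m : {ffun 'I_k -> 'I_N}) cmod (g (fun j => (m j : nat).+1)).

Definition Fpm (R : realType) (k : nat) (a : 'I_k -> R) (s : bool)
    (f : R[i] -> R[i]) (u : R[i]) : R[i] :=
  limn (boxsum (term a s f u)).

(* Main.v *)
Require Import Defs.
From HB Require Import structures.
From mathcomp Require Import all_boot all_order all_algebra.
From mathcomp Require Import complex.
From mathcomp Require Import all_classical all_reals all_analysis.
From mathcomp Require Import ring lra.
Import Order.TTheory GRing.Theory Num.Theory.
Import numFieldNormedType.Exports.
Local Open Scope ring_scope.
Local Open Scope classical_set_scope.
Local Open Scope ring_scope.
Local Open Scope complex_scope.
Local Notation Re := (@complex.Re _).
Local Notation Im := (@complex.Im _).
Section CBasics.
Context {R : realType}.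
Implicit Types z w : R[i].
Lemma cmodE z : cmod z = Num.sqrt (Re z ^+ 2 + Im z ^+ 2).
Proof. by case: z. Qed.
Lemma normC_cmod z : `|z| = (cmod z)%:C.
Proof. by rewrite normc_def cmodE. Qed.
Lemma cmod_ge0 z : 0 <= cmod z.
Proof. by rewrite cmodE sqrtr_ge0. Qed.
Lemma cmod_Re z : `|Re z| <= cmod z.
Proof.
rewrite cmodE -sqrtr_sqr.
apply: ler_wsqrtr. rewrite lerDl. exact: sqr_ge0.
Qed.
Lemma cmod_Im z : `|Im z| <= cmod z.
Proof.
rewrite cmodE -sqrtr_sqr; apply: ler_wsqrtr; rewrite lerDr; exact: sqr_ge0.
Qed.

Lemma cmod_le z : cmod z <= `|Re z| + `|Im z|.
Proof.
rewrite cmodE -[X in _ <= X]ger0_norm ?addr_ge0 // -sqrtr_sqr.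
apply: ler_wsqrtr. rewrite sqrrD (real_normK (num_real (Re z))) (real_normK (num_real (Im z))).
rewrite -addrA lerD2l lerDr. by rewrite mulrn_wge0 // mulr_ge0.
Qed.
Lemma cmodC (x : R) : cmod x%:C = `|x|.
Proof. by rewrite cmodE /= expr0n /= addr0 sqrtr_sqr. Qed.

Lemma cmodD z w : cmod (z + w) <= cmod z + cmod w.
Proof. by rewrite -lecR -!normC_cmod rmorphD /= -!normC_cmod ler_normD. Qed.

Lemma cmodM z w : cmod (z * w) = cmod z * cmod w.
Proof. exact: Normc.normcM. Qed.

Lemma cmodN z : cmod (- z) = cmod z.
Proof. by case: z => x y; rewrite /= !sqrrN. Qed.

Lemma cmodB z w : cmod (z - w) = cmod (w - z).
Proof. by rewrite -cmodN opprB. Qed.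
Lemma cmod_sum (I : finType) (P : pred I) (F : I -> R[i]) :
  cmod (\sum_(i | P i) F i) <= \sum_(i | P i) cmod (F i).
Proof.
elim/big_ind2: _ => //; first by rewrite cmodC normr0.
move=> x1 x2 y1 y2 h1 h2; apply: le_trans (cmodD _ _) _; exact: lerD.
Qed.

Lemma Re_sum (I : finType) (P : pred I) (F : I -> R[i]) :
  Re (\sum_(i | P i) F i) = \sum_(i | P i) Re (F i).
Proof. by elim/big_rec2: _ => // i y1 y2 _ <-; case: (F i); case: y2. Qed.

Lemma Im_sum (I : finType) (P : pred I) (F : I -> R[i]) :
  Im (\sum_(i | P i) F i) = \sum_(i | P i) Im (F i).
Proof. by elim/big_rec2: _ => // i y1 y2 _ <-; case: (F i); case: y2. Qed.

Lemma ReB z w : Re (z - w) = Re z - Re w. Proof. by case: z; case: w. Qed.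
Lemma ImB z w : Im (z - w) = Im z - Im w. Proof. by case: z; case: w. Qed.
Lemma Re_shift z (t : R) : Re (z + t%:C * 'i) = Re z.
Proof. by case: z => x y /=; rewrite mulr0 mul0r subrr addr0. Qed.
Lemma Im_shift z (t : R) : Im (z + t%:C * 'i) = Im z + t.
Proof. by case: z => x y /=; rewrite mulr1 mul0r addr0. Qed.
End CBasics.
Section Cvg.
Context {R : realType}.
Implicit Types v : nat -> R[i].
Lemma cvgC_intro v l :
  (forall e : R, 0 < e -> \forall n \near \oo, cmod (l - v n) < e) -> v @ \oo --> l.
Proof.
move=> H; apply/cvgrPdist_lt => eps; rewrite ltcE /= => /andP[/eqP eI e0].
apply: filterS (H _ e0) => n hn; by rewrite normC_cmod ltcE /= hn eI eqxx.
Qed.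
Lemma cvgC_elim v l : v @ \oo --> l ->
  forall e : R, 0 < e -> \forall n \near \oo, cmod (l - v n) < e.
Proof.
move=> /cvgrPdist_lt H e e0.
have : (0 : R[i]) < e%:C by rewrite ltcE /= eqxx e0.
move=> /H; apply: filterS => n; by rewrite normC_cmod ltcE /= => /andP[].
Qed.
Lemma cvgC_ReIm v (X Y : R) :
  (fun n => Re (v n)) @ \oo --> X -> (fun n => Im (v n)) @ \oo --> Y ->
  v @ \oo --> X +i* Y.
Proof.
move=> /cvgrPdist_lt hX /cvgrPdist_lt hY; apply: cvgC_intro => e e0.
have e2 : 0 < e / 2 by rewrite divr_gt0.
apply: filterS2 (hX _ e2) (hY _ e2) => n h1 h2.
apply: le_lt_trans (cmod_le _) _; rewrite ReB ImB /=.
by rewrite [e]splitr ltrD.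
Qed.
Lemma limC v l : v @ \oo --> l -> limn v = l.
Proof. move=> h; exact: cvg_lim. Qed.
Lemma cvgn_lim v : cvgn v -> v @ \oo --> limn v.
Proof. by []. Qed.
End Cvg.
Section RealSeq.
Context {R : realType}.
Lemma cvg_dom (x b : nat -> R) :
  (forall N N', (N <= N')%N -> `|x N' - x N| <= b N' - b N) ->
  (exists Bd, forall N, b N <= Bd) -> cvgn x.
Proof.
move=> H [Bd hB].
have bnd : {homo b : n m / (n <= m)%N >-> n <= m}.
  move=> n m /H h; rewrite -subr_ge0; exact: le_trans h.
have cb : cvgn b.
  apply: nondecreasing_is_cvgn => //; exists Bd => _ [n _ <-]; exact: hB.
have cc : cvgn (fun n => x n + b n).
  apply: nondecreasing_is_cvgn.
    move=> n m nm; have h := H _ _ nm; rewrite -subr_ge0.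
    have h2 : - (x m - x n) <= `|x m - x n| by rewrite -normrN ler_norm.
    have : 0 <= b m - b n - `|x m - x n| by rewrite subr_ge0.
    move=> h3; lra.
  exists (x 0%N + Bd + Bd - b 0%N) => _ [n _ <-].
  have := H _ _ (leq0n n); have := hB n.
  have h2 : x n - x 0%N <= `|x n - x 0%N| by rewrite ler_norm.
  move=> h4 h5; lra.
have -> : x = (fun n => (x n + b n) - b n) by apply: funext => n; rewrite addrK.
exact: is_cvgB.
Qed.
End RealSeq.
Section Box.
Local Close Scope classical_set_scope.
Context {R : realType}.

Definition widenf k N N' (le : (N <= N')%N) (m : {ffun 'I_k -> 'I_N}) :
  {ffun 'I_k -> 'I_N'} := [ffun j => widen_ord le (m j)].

Arguments widenf {k N N'}.
Lemma widenf_inj k N N' (le : (N <= N')%N) : injective (@widenf k N N' le).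
Proof.
move=> m1 m2 E; apply/ffunP => j; apply/val_inj.
by have := congr1 (fun h : {ffun 'I_k -> 'I_N'} => val (h j)) E; rewrite /= !ffunE.
Qed.

Lemma box_diff k (g : ('I_k -> nat) -> R[i]) N N' : (N <= N')%N ->
  exists S : {set {ffun 'I_k -> 'I_N'}},
    boxsum g N' - boxsum g N = \sum_(m in ~: S) g (fun j => (m j : nat).+1) /\
    boxsum_abs g N' - boxsum_abs g N =
      \sum_(m in ~: S) cmod (g (fun j => (m j : nat).+1)).
Proof.
move=> le; exists [set widenf le m | m in predT].
have E (G : {ffun 'I_k -> 'I_N'} -> R[i]) :
  \sum_(m' in [set widenf le m | m in predT]) G m' = \sum_m G (widenf le m).
  by rewrite big_imset //; move=> x y _ _; exact: widenf_inj.
have E' (G : {ffun 'I_k -> 'I_N'} -> R) :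
  \sum_(m' in [set widenf le m | m in predT]) G m' = \sum_m G (widenf le m).
  by rewrite big_imset //; move=> x y _ _; exact: widenf_inj.
have W : \sum_m g (fun j => (widenf le m j : nat).+1) = boxsum g N.
  by apply: eq_bigr => m _; congr g; apply: funext => j; rewrite ffunE.
have W' : \sum_m cmod (g (fun j => (widenf le m j : nat).+1)) = boxsum_abs g N.
  by apply: eq_bigr => m _; congr (cmod (g _)); apply: funext => j; rewrite ffunE.
split.
  rewrite /boxsum (bigID (fun m => m \in [set widenf le m | m in predT])) /=.
  rewrite E W.
  rewrite addrAC subrr add0r; apply: eq_bigl => m; by rewrite finset.in_setC.
rewrite /boxsum_abs (bigID (fun m => m \in [set widenf le m | m in predT])) /=.
rewrite E' W'.
rewrite addrAC subrr add0r; apply: eq_bigl => m; by rewrite finset.in_setC.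
Qed.

Definition fcons k N (i : 'I_N) (m : {ffun 'I_k -> 'I_N}) : {ffun 'I_k.+1 -> 'I_N} :=
  [ffun j => if unlift ord0 j is Some j' then m j' else i].

Definition ftail k N (m : {ffun 'I_k.+1 -> 'I_N}) : {ffun 'I_k -> 'I_N} :=
  [ffun j => m (lift ord0 j)].

Arguments fcons {k N}.
Arguments ftail {k N}.
Lemma fcons0 k N i m : @fcons k N i m ord0 = i.
Proof. by rewrite ffunE unlift_none. Qed.
Lemma fconsS k N i m j : @fcons k N i m (lift ord0 j) = m j.
Proof. by rewrite ffunE liftK. Qed.

Lemma box_rec k N (F : {ffun 'I_k.+1 -> 'I_N} -> R[i]) :
  \sum_m F m = \sum_(i < N) \sum_(m : {ffun 'I_k -> 'I_N}) F (fcons i m).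
Proof.
rewrite pair_big /=.
rewrite (reindex (fun m : {ffun 'I_k.+1 -> 'I_N} => (m ord0, ftail m))) /=; last first.
  exists (fun p => fcons p.1 p.2) => [m _|[i m] _] /=.
    apply/ffunP => j; rewrite ffunE; case: unliftP => [j' ->|->] //.
    by rewrite ffunE.
  by congr pair; [rewrite fcons0 | apply/ffunP => j; rewrite ffunE fconsS].
apply: eq_bigr => m _; congr F; apply/ffunP => j; rewrite ffunE.
case: unliftP => [j' ->|->] //; by rewrite ffunE.
Qed.

Lemma box_prod k N (h : 'I_N -> R) :
  \sum_(m : {ffun 'I_k -> 'I_N}) \prod_(j < k) h (m j) = (\sum_(i < N) h i) ^+ k.
Proof.
rewrite -(bigA_distr_bigA (fun (j : 'I_k) (i : 'I_N) => h i)) /=.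
by rewrite prodr_const card_ord.
Qed.
End Box.
Section Pow.
Context {R : realType}.
Implicit Types x y r q : R.

Lemma powRN_le x y r : 0 < x -> x <= y -> 0 <= r -> y `^ (- r) <= x `^ (- r).
Proof.
move=> x0 xy r0; rewrite !powRN lef_pV2 ?posrE ?powR_gt0 //; last exact: lt_le_trans xy.
by apply: ge0_ler_powR => //; rewrite nnegrE ltW // (lt_le_trans x0).
Qed.

Lemma geom_le r J : 0 <= r < 1 -> \sum_(j < J) r ^+ j <= (1 - r)^-1.
Proof.
case/andP=> r0 r1.
have E : (\sum_(j < J) r ^+ j) * (1 - r) = 1 - r ^+ J.
  elim: J => [|J IH]; first by rewrite big_ord0 mul0r expr0 subrr.
  by rewrite big_ord_recr /= mulrDl IH exprS; ring.
have r1' : 0 < 1 - r by rewrite subr_gt0.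
rewrite -(ler_pM2r r1') mulVf ?gt_eqF // E lerBlDr lerDl.
exact: exprn_ge0.
Qed.

Lemma zeta_bound q : 1 < q ->
  exists Z, forall N, \sum_(i < N) ((i.+1)%:R : R) `^ (- q) <= Z.
Proof.
move=> q1.
set r := (2 : R) `^ (1 - q).
have r0 : 0 <= r by exact: powR_ge0.
have r1 : r < 1.
  have e2 : (2 : R) = expR (ln 2) by rewrite lnK // posrE.
  rewrite /r e2 -expRM expR_lt1 pmulr_rlt0 ?ln_gt0 ?ltr1n //; lra.
set c := fun n : nat => (n%:R : R) `^ (- q).
have c0 n : 0 <= c n by exact: powR_ge0.
have blk J : \sum_(2 ^ J <= n < 2 ^ J.+1) c n <= r ^+ J.
  have p0 : (0 : R) < (2 ^ J)%:R by rewrite ltr0n expn_gt0.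
  apply: (@le_trans _ _ (\sum_(2 ^ J <= n < 2 ^ J.+1) c (2 ^ J)%N)).
    apply: ler_sum_nat => n /andP[h1 h2]; apply: powRN_le => //; last lra.
    by rewrite ler_nat.
  rewrite sumr_const_nat.
  have -> : (2 ^ J.+1 - 2 ^ J = 2 ^ J)%N by rewrite expnS mul2n -addnn addnK.
  rewrite -mulr_natl /c.
  have -> : ((2 ^ J)%:R : R) * (2 ^ J)%:R `^ (- q) = (2 ^ J)%:R `^ (1 - q).
    have hx : ((2 ^ J)%:R : R) != 0 by rewrite gt_eqF.
    have -> : (1 - q) = (1 : R) + - q by [].
    have := @powRD R ((2 ^ J)%:R) 1 (- q); rewrite hx implybT => /(_ isT) ->.
    by rewrite powRr1 // ltW.
  rewrite natrX -powR_mulrn // -powRrM mulrC powRrM powR_mulrn //.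
have S J : \sum_(1 <= n < 2 ^ J) c n <= \sum_(j < J) r ^+ j.
  elim: J => [|J IH]; first by rewrite big_ord0 expn0 big_geq.
  rewrite (@big_cat_nat _ _ _ (2 ^ J)) ?expn_gt0 ?leq_exp2l //=.
  by rewrite big_ord_recr /= lerD.
exists (1 - r)^-1 => N.
have -> : \sum_(i < N) ((i.+1)%:R : R) `^ (- q) = \sum_(1 <= n < N.+1) c n.
  by rewrite big_add1 /= big_mkord.
have G : \sum_(j < N.+1) r ^+ j <= (1 - r)^-1 by apply: geom_le; rewrite r0 r1.
apply: le_trans G.
apply: le_trans (S N.+1).
rewrite [X in _ <= X](@big_cat_nat _ _ _ N.+1) //=; last first.
  by apply: ltnW; rewrite ltn_expl.
rewrite lerDl; exact: sumr_ge0.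
Qed.
End Pow.
Section Geo.
Context {R : realType}.

Lemma sgn2 s : sgn R s * sgn R s = 1.
Proof. by case: s; rewrite /sgn ?mulr1 ?mulrNN ?mulr1. Qed.

Lemma geo s (K' L y : R) (v : R[i]) : 0 <= K' -> 0 < L -> Re v < - L ->
  - K' < sgn R s * Im v -> 0 <= y ->
  cmod v + y <= (3 + 2 * K' / L) * cmod (v + (sgn R s * y)%:C * 'i).
Proof.
move=> K0 L0 hRe hIm y0.
have hT : `|Im v| + y <= 2 * `|Im v + sgn R s * y| + 2 * K'.
  have n1 := ler_norm (Im v + sgn R s * y).
  have n2 : - (Im v + sgn R s * y) <= `|Im v + sgn R s * y| by rewrite -normrN ler_norm.
  move: hIm n1 n2; case: s; rewrite /sgn ?mul1r ?mulN1r => hIm n1 n2.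
    case: (lerP 0 (Im v)) => h; [rewrite ger0_norm // | rewrite ltr0_norm //]; lra.
  case: (lerP 0 (Im v)) => h; [rewrite ger0_norm // | rewrite ltr0_norm //]; lra.
set w := v + _.
have Rw : Re w = Re v by rewrite Re_shift.
have Iw : Im w = Im v + sgn R s * y by rewrite Im_shift.
have h1 := cmod_Re w; have h2 := cmod_Im w; have h3 := cmod_le v.
rewrite Rw in h1; rewrite Iw in h2.
have hX : `|Re v| = - Re v by rewrite ltr0_norm //; lra.
rewrite hX in h1 h3.
have hq : 0 <= K' / L by rewrite divr_ge0 // ltW.
have hh : K' <= K' / L * (- Re v).
  have hp : 0 <= - Re v - L by lra.
  have := mulr_ge0 hq hp; rewrite mulrBr divfK ?gt_eqF // subr_ge0.
  by [].
have hh2 : K' / L * (- Re v) <= K' / L * cmod w by rewrite ler_wpM2l.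
have E : (3 + 2 * K' / L) * cmod w = 3 * cmod w + 2 * (K' / L * cmod w).
  by rewrite !mulrDl !mulrA.
rewrite E; lra.
Qed.
End Geo.
Section PB.
Context {R : realType}.

Lemma prod_powR k (Y c : R) : 0 <= Y -> \prod_(j < k) Y `^ c = Y `^ (c * k%:R).
Proof.
move=> Y0; rewrite prodr_const card_ord -powR_mulrn ?powR_ge0 //.
by rewrite -powRrM.
Qed.

Lemma le_sum_one k (F : 'I_k -> R) j : (forall i, 0 <= F i) -> F j <= \sum_i F i.
Proof. by move=> h; rewrite (bigD1 j) //= lerDl sumr_ge0. Qed.

Lemma prod_bound k (a : 'I_k -> R) (m : 'I_k -> nat) (L Y p : R) :
  (forall j, 0 < a j) -> 0 < L -> L <= Y -> 0 <= p ->
  (forall j, (pi * a j * (m j)%:R) <= Y) -> (forall j, (1 <= m j)%N) ->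
  Y `^ (- p) <= (L `^ (- p) + \prod_(j < k) (pi * a j) `^ (- (p / k%:R))) *
                \prod_(j < k) ((m j)%:R `^ (- (p / k%:R))).
Proof.
move=> ha L0 LY p0 hY hm.
have Y0 : 0 < Y by exact: lt_le_trans LY.
case: k a m ha hY hm => [|k] a m ha hY hm.
  rewrite !big_ord0 !mulr1; apply: (le_trans (powRN_le _ _ _ L0 LY p0)).
  by rewrite lerDl.
have k0 : (k.+1%:R : R) != 0 by rewrite pnatr_eq0.
have -> : Y `^ (- p) = \prod_(j < k.+1) Y `^ (- (p / k.+1%:R)).
  by rewrite prod_powR ?ltW // mulNr divfK.
apply: (@le_trans _ _ (\prod_(j < k.+1) ((pi * a j) `^ (- (p / k.+1%:R)) *
                                    ((m j)%:R `^ (- (p / k.+1%:R)))))).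
  apply: ler_prod => j _; apply/andP; split; first exact: powR_ge0.
  have hpa : 0 <= pi * a j by rewrite mulr_ge0 ?pi_ge0 // ltW.
  rewrite -powRM ?ler0n //.
  apply: powRN_le; [ by rewrite mulr_gt0 ?ltr0n ?hm // mulr_gt0 ?pi_gt0 ?ha
                   | exact: hY | by rewrite divr_ge0 ?ler0n].
rewrite big_split /=; apply: ler_wpM2r.
  by apply: prodr_ge0 => j _; exact: powR_ge0.
by rewrite lerDr powR_ge0.
Qed.
Lemma zeta_pow k (p : R) : k%:R < p -> exists Z, 0 <= Z /\ forall N,
  (\sum_(i < N) ((i.+1)%:R : R) `^ (- (p / k%:R))) ^+ k <= Z.
Proof.
case: k => [|k] hp.
  by exists 1; split => // N; rewrite expr0.
have q1 : 1 < p / k.+1%:R by rewrite ltr_pdivlMr ?ltr0n // mul1r.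
have [Z hZ] := zeta_bound _ q1.
have Z0 : 0 <= Z by have := hZ 0%N; rewrite big_ord0.
exists (Z ^+ k.+1); split; first exact: exprn_ge0.
move=> N; apply: lerXn2r; rewrite ?nnegrE ?hZ //.
by apply: sumr_ge0 => i _; exact: powR_ge0.
Qed.
End PB.
Section Main.
Context {R : realType}.
Variables (K L A M : R) (s : bool) (f : R[i] -> R[i]).
Hypotheses (hK : 0 < K) (hL : 0 < L) (hM : 0 <= M) (hA : 0 < A).
Hypothesis hf : forall u, Qpm s K L u -> cmod (f u) <= M * cmod u `^ (- A).
Local Notation sg := (sgn R s).

Definition yv k (a : 'I_k -> R) (m : 'I_k -> nat) : R :=
  2 * pi * \sum_(j < k) a j * (m j)%:R - pi * \sum_(j < k) a j.

Arguments yv {k}.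
Lemma term_E k (a : 'I_k -> R) u m :
  term a s f u m = ((- sg) ^+ k)%:C * f (u + (sg * yv a m)%:C * 'i).
Proof.
rewrite /term; congr (_ * f _); rewrite /yv -addrA; congr (_ + _).
rewrite -mulrBl -rmorphB /=; congr (_%:C * _); ring.
Qed.

Lemma cmod_sgk k : cmod (((- sg) ^+ k)%:C) = 1.
Proof. by rewrite cmodC normrX normrN; case: s; rewrite /sgn ?normrN normr1 expr1n. Qed.

Lemma yv_ge k (a : 'I_k -> R) m : (forall j, 0 < a j) -> (forall j, (1 <= m j)%N) ->
  pi * \sum_j a j <= yv a m /\ forall j, pi * a j * (m j)%:R <= yv a m.
Proof.
move=> ha hm.
have S01 : \sum_j a j <= \sum_j a j * (m j)%:R.
  apply: ler_sum => j _; rewrite ler_pMr ?ha // ler1n; exact: hm.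
have S0 : 0 <= \sum_j a j by apply: sumr_ge0 => j _; exact: ltW.
have hp := pi_gt0 R.
have h1 : pi * \sum_j a j <= pi * \sum_j a j * (m j)%:R by rewrite ler_pM2l.
split; rewrite /yv; first lra.
move=> j; have : a j * (m j)%:R <= \sum_j a j * (m j)%:R.
  rewrite (bigD1 j) //= lerDl; apply: sumr_ge0 => i _.
  by rewrite mulr_ge0 ?ler0n ?ltW.
move=> h2; have h3 : pi * (a j * (m j)%:R) <= pi * \sum_j a j * (m j)%:R.
  by rewrite ler_pM2l.
rewrite mulrA in h3; lra.
Qed.

Definition Dk k (a : 'I_k -> R) (p : R) :=
  L `^ (- p) + \prod_(j < k) (pi * a j) `^ (- (p / k%:R)).

Arguments Dk {k}.
Lemma term_bound k (a : 'I_k -> R) (K' B : R) (x : R[i]) (m : 'I_k -> nat) :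
  (forall j, 0 < a j) -> 0 <= K' -> K' <= K + pi * \sum_j a j -> 0 < B -> B < A ->
  Re x < - L -> - K' < sg * Im x -> (forall j, (1 <= m j)%N) ->
  cmod (term a s f x m) <= M * ((3 + 2 * K' / L)^-1) `^ (- A) * cmod x `^ (- B) *
     (Dk a (A - B) * \prod_(j < k) ((m j)%:R `^ (- ((A - B) / k%:R)))).
Proof.
move=> ha K0 KK B0 BA hRe hIm hm.
rewrite term_E cmodM cmod_sgk mul1r.
have [y0 hy] := yv_ge _ _ _ ha hm.
move: (yv a m) y0 hy => y y0 hy.
have S0 : 0 <= \sum_j a j by apply: sumr_ge0 => j _; exact: ltW.
have hp := pi_gt0 R.
have py : 0 <= pi * \sum_j a j by rewrite mulr_ge0 // ltW.
have wQ : Qpm s K L (x + (sg * y)%:C * 'i).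
  rewrite /Qpm Re_shift Im_shift; split => //.
  move: hIm; case: s; rewrite /sgn ?mul1r ?mulN1r => hIm; lra.
apply: (le_trans (hf _ wQ)).
have G0 : 0 < 3 + 2 * K' / L.
  have : 0 <= 2 * K' / L by rewrite divr_ge0 ?mulr_ge0 // ltW.
  lra.
have cx : L < cmod x.
  have := cmod_Re x; rewrite ltr0_norm => [h|]; last first.
    by apply: (lt_trans hRe); rewrite oppr_lt0.
  by apply: lt_le_trans h; rewrite ltrNr.
have cx0 : 0 < cmod x by move: cx hL; lra.
have Y0 : 0 < cmod x + y by move: cx0 py y0; lra.
have hg := geo s _ _ _ _ K0 hL hRe hIm (le_trans py y0).
have cw : (cmod x + y) * (3 + 2 * K' / L)^-1 <= cmod (x + (sg * y)%:C * 'i).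
  by rewrite ler_pdivrMr // mulrC.
have E1 : cmod (x + (sg * y)%:C * 'i) `^ (- A) <=
          (cmod x + y) `^ (- A) * ((3 + 2 * K' / L)^-1) `^ (- A).
  have Gi : 0 <= (3 + 2 * K' / L)^-1 by rewrite invr_ge0 ltW.
  rewrite -powRM ?(ltW Y0) //.
  apply: powRN_le; [by rewrite mulr_gt0 ?invr_gt0 | exact: cw | exact: ltW].
have E2 : (cmod x + y) `^ (- A) = (cmod x + y) `^ (- B) * (cmod x + y) `^ (- (A - B)).
  have -> : - A = - B + - (A - B) by ring.
  by rewrite powRD // (gt_eqF Y0) implybT.
have E3 : (cmod x + y) `^ (- B) <= cmod x `^ (- B).
  apply: powRN_le => //; [lra | exact: ltW].
have E4 : (cmod x + y) `^ (- (A - B)) <=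
     Dk a (A - B) * \prod_(j < k) ((m j)%:R `^ (- ((A - B) / k%:R))).
  apply: prod_bound => //; try lra.
  by move=> j; have := hy j; lra.
rewrite E2 in E1.
have P1 := powR_ge0 ((3 + 2 * K' / L)^-1) (- A).
have P2 := powR_ge0 (cmod x + y) (- B).
have P3 := powR_ge0 (cmod x + y) (- (A - B)).
move: E1 E3 E4 P1 P2 P3.
set G := _ `^ (- A); set D := Dk a (A - B) * _.
set c1 := _ `^ (- B); set c2 := _ `^ (- B); set c3 := _ `^ (- (A - B)).
move=> E1 E3 E4 P1 P2 P3.
apply: (le_trans (ler_wpM2l hM E1)).
set G' := (3 + 2 * K' / L)^-1 `^ (- A).
have -> : M * G' * c2 * D = M * (c2 * D * G') by ring.
apply: ler_wpM2l => //; apply: ler_wpM2r => //; exact: ler_pM.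
Qed.

Lemma Dk_ge0 k (a : 'I_k -> R) p : 0 <= Dk a p.
Proof. by rewrite addr_ge0 ?powR_ge0 // prodr_ge0 // => j _; exact: powR_ge0. Qed.

Lemma boxabs_bound k (a : 'I_k -> R) (K' B : R) :
  (forall j, 0 < a j) -> 0 <= K' -> K' <= K + pi * \sum_j a j -> 0 < B ->
  B < A - k%:R ->
  exists C, 0 <= C /\ forall x : R[i], Re x < - L -> - K' < sg * Im x ->
    forall N, boxsum_abs (term a s f x) N <= C * cmod x `^ (- B).
Proof.
move=> ha K0 KK B0 BA.
have BA' : B < A by have := ler0n R k; lra.
have kp : k%:R < A - B by lra.
have [Z [Z0 hZ]] := zeta_pow _ _ kp.
set G := ((3 + 2 * K' / L)^-1) `^ (- A).
have G0 : 0 <= G by exact: powR_ge0.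
have D0 := Dk_ge0 _ a (A - B).
exists (M * G * Dk a (A - B) * Z); split.
  by rewrite !mulr_ge0.
move=> x hRe hIm N.
set q := (A - B) / k%:R.
apply: (@le_trans _ _ (\sum_(m : {ffun 'I_k -> 'I_N})
   (M * G * cmod x `^ (- B) * Dk a (A - B)) *
     \prod_(j < k) (((m j : nat).+1)%:R `^ (- q)))).
  apply: ler_sum => m _.
  apply: le_trans (term_bound _ _ _ _ _ _ ha K0 KK B0 BA' hRe hIm _) _.
    by move=> j.
  by rewrite /G /q mulrA.
rewrite -mulr_sumr (box_prod k N (fun i : 'I_N => ((i : nat).+1%:R : R) `^ (- q))).
have cB := powR_ge0 (cmod x) (- B).
have -> : M * G * Dk a (A - B) * Z * cmod x `^ (- B) =
          (M * G * cmod x `^ (- B) * Dk a (A - B)) * Z by ring.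
by apply: ler_wpM2l; [rewrite !mulr_ge0 | exact: hZ].
Qed.

Lemma series_cvg k (a : 'I_k -> R) (K' : R) (x : R[i]) :
  (forall j, 0 < a j) -> 0 <= K' -> K' <= K + pi * \sum_j a j ->
  k%:R < A -> Re x < - L -> - K' < sg * Im x ->
  cvgn (boxsum (term a s f x)) /\ cvgn (boxsum_abs (term a s f x)).
Proof.
move=> ha K0 KK kA hRe hIm.
have B0 : 0 < (A - k%:R) / 2 by rewrite divr_gt0 // subr_gt0.
have BA : (A - k%:R) / 2 < A - k%:R by rewrite ltr_pdivrMr //; lra.
have [C [C0 hC]] := boxabs_bound _ _ _ _ ha K0 KK B0 BA.
set g := term a s f x.
have bnd : exists Bd, forall N, boxsum_abs g N <= Bd.
  by exists (C * cmod x `^ (- ((A - k%:R) / 2))) => N; exact: hC.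
have dif N N' : (N <= N')%N -> 
    `|Re (boxsum g N') - Re (boxsum g N)| <= boxsum_abs g N' - boxsum_abs g N /\
    `|Im (boxsum g N') - Im (boxsum g N)| <= boxsum_abs g N' - boxsum_abs g N /\
    `|boxsum_abs g N' - boxsum_abs g N| <= boxsum_abs g N' - boxsum_abs g N.
  move=> le; have [S [E1 E2]] := box_diff _ g _ _ le.
  have h := cmod_sum _ (fun m => m \in ~: S) (fun m : {ffun 'I_k -> 'I_N'} => g (fun j => (m j : nat).+1)).
  rewrite -E1 -E2 in h.
  have h0 : 0 <= boxsum_abs g N' - boxsum_abs g N.
    by rewrite E2; apply: sumr_ge0 => m _; exact: cmod_ge0.
  rewrite -ReB -ImB (ger0_norm h0); split; last split => //.
    exact: le_trans (cmod_Re _) h.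
  exact: le_trans (cmod_Im _) h.
have cRe : cvgn (fun N => Re (boxsum g N)).
  by apply: (cvg_dom _ _ _ bnd) => N N' /dif [].
have cIm : cvgn (fun N => Im (boxsum g N)).
  by apply: (cvg_dom _ _ _ bnd) => N N' /dif [_ []].
have cAb : cvgn (boxsum_abs g).
  by apply: (cvg_dom _ _ _ bnd) => N N' /dif [_ []].
split => //.
exact: cvgP (cvgC_ReIm _ _ _ cRe cIm).
Qed.

Lemma Qpm_iff u : Qpm s K L u <-> Re u < - L /\ - K < sg * Im u.
Proof.
rewrite /Qpm; case: s; rewrite /sgn ?mul1r ?mulN1r //.
by rewrite ltrNl opprK.
Qed.

Lemma lim_bound (v : nat -> R[i]) l (b : R) : v @ \oo --> l ->
  (forall N, cmod (v N) <= b) -> cmod l <= b.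
Proof.
move=> h hb; apply/ler_addgt0Pr => e e0.
case: (cvgC_elim _ _ h _ e0) => N _ hN.
have h1 := hN N (leqnn N); have h2 := hb N.
have := cmodD (l - v N) (v N); rewrite subrK => h3.
move: h1 h2 h3; simpl; lra.
Qed.

Lemma Fpm_bound k (a : 'I_k -> R) (B : R) :
  (forall j, 0 < a j) -> k%:R < A -> B < A - k%:R ->
  exists M', forall u, Qpm s K L u -> cmod (Fpm a s f u) <= M' * cmod u `^ (- B).
Proof.
move=> ha kA BA.
set B0 := Num.max B ((A - k%:R) / 2).
have h2 : 0 < (A - k%:R) / 2 by rewrite divr_gt0 // subr_gt0.
have h3 : (A - k%:R) / 2 < A - k%:R by rewrite ltr_pdivrMr //; lra.
have B0p : 0 < B0 by rewrite /B0 lt_max h2 orbT.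
have B0A : B0 < A - k%:R by rewrite /B0 gt_max BA h3.
have BB0 : B <= B0 by rewrite /B0 le_max lexx.
have S0 : 0 <= \sum_j a j by apply: sumr_ge0 => j _; exact: ltW.
have KK : K <= K + pi * \sum_j a j by rewrite lerDl mulr_ge0 ?pi_ge0.
have [C [C0 hC]] := boxabs_bound _ _ _ _ ha (ltW hK) KK B0p B0A.
exists (C * L `^ (- (B0 - B))) => u /Qpm_iff [hRe hIm].
have [cv _] := series_cvg _ _ _ _ ha (ltW hK) KK kA hRe hIm.
have cu : L < cmod u.
  have := cmod_Re u; rewrite ltr0_norm => [h|]; last first.
    by apply: (lt_trans hRe); rewrite oppr_lt0.
  by apply: lt_le_trans h; rewrite ltrNr.
have cu0 : 0 < cmod u by move: cu hL; lra.
apply: (le_trans (lim_bound _ _ _ cv _)).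
  move=> N; apply: le_trans (cmod_sum _ _ _) _; exact: hC.
have -> : - B0 = - B + - (B0 - B) by ring.
rewrite powRD ?(gt_eqF cu0) ?implybT //.
set p1 := cmod u `^ (- B); set p3 := L `^ (- (B0 - B)).
have -> : C * p3 * p1 = C * (p1 * p3) by ring.
apply: ler_wpM2l => //; apply: ler_wpM2l; first exact: powR_ge0.
apply: powRN_le => //; [exact: ltW | by rewrite subr_ge0].
Qed.

Lemma sg_cases : sg = 1 \/ sg = -1.
Proof. by rewrite /sgn; case: s; [left | right]. Qed.

Lemma shA (u : R[i]) p q : u + 'i * p%:C + q%:C * 'i = u + (p + q)%:C * 'i.
Proof. rewrite rmorphD /=; ring. Qed.
Lemma shB (u : R[i]) p q : u - 'i * p%:C + q%:C * 'i = u + (q - p)%:C * 'i.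
Proof. rewrite rmorphB /=; ring. Qed.
Lemma sh0 (u : R[i]) : u + 0%:C * 'i = u.
Proof. by rewrite mul0r addr0. Qed.

Lemma Deltas_sum (bs : seq R) (c : R[i]) N (t : nat -> R[i]) (G : R[i] -> R[i]) v :
  Deltas bs (fun x => c * \sum_(i < N) G (x + t i)) v =
  c * \sum_(i < N) Deltas bs G (v + t i).
Proof.
elim: bs v => [|b bs IH] v //=.
rewrite /Delta !IH -mulrBr -sumrB; congr (_ * _); apply: eq_bigr => i _.
by rewrite [v + _ + _]addrAC [v - _ + _]addrAC.
Qed.

Lemma ReDi (v : R[i]) x : Re (v + 'i * x%:C) = Re v.
Proof. by case: v => p q /=; ring. Qed.
Lemma ImDi (v : R[i]) x : Im (v + 'i * x%:C) = Im v + x.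
Proof. by case: v => p q /=; ring. Qed.
Lemma ReBi (v : R[i]) x : Re (v - 'i * x%:C) = Re v.
Proof. by case: v => p q /=; ring. Qed.
Lemma ImBi (v : R[i]) x : Im (v - 'i * x%:C) = Im v - x.
Proof. by case: v => p q /=; ring. Qed.

Lemma Deltas_bound (bs : seq R) (G : R[i] -> R[i]) (C eps t0 : R) :
  all (fun b => 0 <= b) bs -> 0 < t0 -> 0 <= eps -> 0 <= C ->
  (forall v, Re v < - L -> t0 <= sg * Im v -> cmod (G v) <= C * (sg * Im v) `^ (- eps)) ->
  forall v, Re v < - L -> t0 + pi * \sum_(b <- bs) b <= sg * Im v ->
  cmod (Deltas bs G v) <= 2 ^+ size bs * C * (sg * Im v - pi * \sum_(b <- bs) b) `^ (- eps).
Proof.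
move=> + t00 e0 C0 hG; elim: bs => [|b bs IH] /=.
  by move=> _ v hRe; rewrite big_nil mulr0 addr0 subr0 expr0 mul1r; exact: hG.
case/andP=> b0 hbs v hRe hIm.
have IH' := IH hbs.
rewrite big_cons in hIm *.
have Sbs : 0 <= \sum_(b <- bs) b by rewrite big_seq; apply: sumr_ge0 => x /(allP hbs).
have hp := pi_gt0 R.
have pb : 0 <= pi * b by rewrite mulr_ge0 // ltW.
have ps : 0 <= pi * \sum_(b <- bs) b by rewrite mulr_ge0 // ltW.
set T := sg * Im v - pi * (b + \sum_(b <- bs) b).
have T0 : t0 <= T by rewrite /T; move: hIm; rewrite mulrDr; lra.
have key : forall w, Re w = Re v -> sg * Im v - pi * b <= sg * Im w ->
    cmod (Deltas bs G w) <= 2 ^+ size bs * C * T `^ (- eps).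
  move=> w hw hw2.
  have h1 : t0 + pi * \sum_(b <- bs) b <= sg * Im w by move: hw2 T0; rewrite /T mulrDr; lra.
  apply: (le_trans (IH' _ _ h1)); first by rewrite hw.
  apply: ler_wpM2l; first by rewrite mulr_ge0 ?exprn_ge0.
  apply: powRN_le => //; first by move: t00 T0; lra.
  by move: hw2; rewrite /T mulrDr; lra.
rewrite /Delta.
apply: le_trans (cmodD _ _) _; rewrite cmodN exprS -!mulrA mulr2n mulrDl mul1r !mulrA.
apply: lerD; apply: key.
- by rewrite ReDi.
- rewrite ImDi mulrDr; case: sg_cases => ->; lra.
- by rewrite ReBi.
- rewrite ImBi mulrBr; case: sg_cases => ->; lra.
Qed.

Arguments fcons {k N}.

Definition tsh (b : R) (n : nat) : R[i] :=
  (sg * (2 * pi * b * n.+1%:R - pi * b))%:C * 'i.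

Lemma term_rec k (a : 'I_k.+1 -> R) u N (i : 'I_N) (m' : {ffun 'I_k -> 'I_N}) :
  term a s f u (fun j => (fcons i m' j : nat).+1) =
  (- sg)%:C * term (fun j => a (lift ord0 j)) s f (u + tsh (a ord0) i)
                   (fun j => (m' j : nat).+1).
Proof.
rewrite !term_E exprS rmorphM /= -mulrA; congr (_ * (_ * f _)).
rewrite /tsh -addrA -mulrDl -rmorphD; congr (u + _%:C * 'i).
rewrite /yv !big_ord_recl fcons0.
under eq_bigr do rewrite fconsS.
ring.
Qed.

Lemma boxsum_rec k (a : 'I_k.+1 -> R) N :
  (fun v => boxsum (term a s f v) N) =
  fun v => (- sg)%:C * \sum_(i < N)
     boxsum (term (fun j => a (lift ord0 j)) s f (v + tsh (a ord0) i)) N.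
Proof.
apply: funext => v; rewrite /boxsum box_rec mulr_sumr; apply: eq_bigr => i _.
rewrite mulr_sumr; apply: eq_bigr => m' _; exact: term_rec.
Qed.

Lemma tele (Phi : R[i] -> R[i]) (b : R) N u :
  Delta b (fun v => (- sg)%:C * \sum_(i < N) Phi (v + tsh b i)) u =
  Phi u - Phi (u + (sg * (2 * pi * b * N%:R))%:C * 'i).
Proof.
rewrite /Delta -mulrBr -sumrB.
set X := fun n : nat => Phi (u + (sg * (2 * pi * b * n%:R))%:C * 'i).
have X0 : X 0%N = Phi u by rewrite /X !mulr0 sh0.
have T : \sum_(i < N) (X i.+1 - X i) = X N - X 0%N.
  by rewrite -(big_mkord xpredT (fun i => X i.+1 - X i)) telescope_sumr.
case: sg_cases => hs.
  have E (i : 'I_N) : Phi (u + 'i * (b * pi)%:C + tsh b i) -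
                      Phi (u - 'i * (b * pi)%:C + tsh b i) = X i.+1 - X i.
    rewrite /tsh /X shA shB hs; congr (Phi (u + _%:C * 'i) - Phi (u + _%:C * 'i)).
      ring.
    rewrite -natr1; ring.
  rewrite (eq_bigr _ (fun i _ => E i)) T X0 hs /X -/X.
  rewrite rmorphN rmorph1 mulN1r opprB /X hs; by [].
have E (i : 'I_N) : Phi (u + 'i * (b * pi)%:C + tsh b i) -
                    Phi (u - 'i * (b * pi)%:C + tsh b i) = - (X i.+1 - X i).
  rewrite opprB /tsh /X shA shB hs; congr (Phi (u + _%:C * 'i) - Phi (u + _%:C * 'i)).
    rewrite -natr1; ring.
  ring.
rewrite (eq_bigr _ (fun i _ => E i)) sumrN T X0 hs opprK rmorph1 mul1r opprB.
by rewrite /X hs.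
Qed.

Lemma powR_small (B e : R) : 0 < B -> 0 < e ->
  exists T0, 0 < T0 /\ forall T, T0 <= T -> T `^ (- B) <= e.
Proof.
move=> B0 e0; exists (e `^ (- B^-1)); split; first exact: powR_gt0.
move=> T hT; apply: (le_trans (powRN_le _ _ _ (powR_gt0 _ e0) hT (ltW B0))).
rewrite -powRrM.
have -> : - B^-1 * - B = 1 by rewrite mulrNN mulVf ?gt_eqF.
by rewrite powRr1 // ltW.
Qed.

Lemma nat_large (X : R) : exists N0 : nat, forall N, (N0 <= N)%N -> X <= N%:R.
Proof.
exists (Num.Def.archi_bound `|X|) => N hN.
apply: (le_trans (ler_norm X)); apply: ltW.
apply: (lt_le_trans (archi_boundP (normr_ge0 X))).
by rewrite ler_nat.
Qed.

Lemma sgIm_le (x : R[i]) : sg * Im x <= cmod x.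
Proof.
apply: le_trans (cmod_Im x); case: sg_cases => ->; rewrite ?mul1r ?mulN1r.
  exact: ler_norm.
by rewrite -normrN ler_norm.
Qed.

Lemma far k (a : 'I_k -> R) (b : R) (u : R[i]) :
  (forall j, 0 < a j) -> k%:R < A -> 0 < b -> Re u < - L ->
  forall e, 0 < e -> \forall N \near \oo,
    cmod (Deltas [seq a j | j <- enum 'I_k] (fun v => boxsum (term a s f v) N)
           (u + (sg * (2 * pi * b * N%:R))%:C * 'i)) < e.
Proof.
move=> ha kA b0 hRe e e0.
have B0 : 0 < (A - k%:R) / 2 by rewrite divr_gt0 // subr_gt0.
have BA : (A - k%:R) / 2 < A - k%:R by rewrite ltr_pdivrMr //; lra.
have S0 : 0 <= \sum_j a j by apply: sumr_ge0 => j _; exact: ltW.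
have KK : K <= K + pi * \sum_j a j by rewrite lerDl mulr_ge0 ?pi_ge0.
have [C [C0 hC]] := boxabs_bound _ _ _ _ ha (ltW hK) KK B0 BA.
set B := (A - k%:R) / 2 in B0 BA hC.
set bs := [seq a j | j <- enum 'I_k].
have bs0 : all (fun b => 0 <= b) bs by apply/allP => x /mapP [j _ ->]; exact: ltW.
have hG N : forall v, Re v < - L -> 1 <= sg * Im v ->
    cmod (boxsum (term a s f v) N) <= C * (sg * Im v) `^ (- B).
  move=> v hv1 hv2.
  have hv3 : - K < sg * Im v by move: hK hv2; lra.
  apply: (le_trans (cmod_sum _ _ _)); apply: (le_trans (hC _ hv1 hv3 N)).
  apply: ler_wpM2l => //; apply: powRN_le; [lra | exact: sgIm_le | exact: ltW].
set S := \sum_(b <- bs) b.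
set c := 2 ^+ size bs * C.
have c0 : 0 <= c by rewrite mulr_ge0 ?exprn_ge0.
have e1 : 0 < e / (c + 1) by rewrite divr_gt0 //; lra.
have [T0 [T00 hT0]] := powR_small _ _ B0 e1.
have hp := pi_gt0 R.
have pb : 0 < 2 * pi * b by rewrite !mulr_gt0.
have [N0 hN0] := nat_large ((T0 + 1 + pi * S - sg * Im u) / (2 * pi * b)).
exists N0 => // N /= hN.
have hN' := hN0 _ hN.
rewrite ler_pdivrMr // in hN'.
set x := u + _.
have Ix : sg * Im x = sg * Im u + 2 * pi * b * N%:R.
  by rewrite /x Im_shift mulrDr mulrA sgn2 mul1r.
have Rx : Re x < - L by rewrite /x Re_shift.
have hx : 1 + pi * S <= sg * Im x by rewrite Ix; move: hN'; lra.
apply: (le_lt_trans (Deltas_bound _ _ _ _ _ bs0 ltr01 (ltW B0) C0 (hG N) _ Rx hx)) => //.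
have hT : T0 <= sg * Im x - pi * S by rewrite Ix; move: hN'; lra.
have := hT0 _ hT; rewrite -/c => h.
apply: (le_lt_trans (ler_wpM2l c0 h)).
have q1 : c / (c + 1) < 1 by rewrite ltr_pdivrMr; lra.
have -> : c * (e / (c + 1)) = e * (c / (c + 1)) by ring.
by rewrite -[X in _ < X]mulr1 ltr_pM2l.
Qed.

Lemma Dk_ind k : k%:R < A -> forall (a : 'I_k -> R), (forall j, 0 < a j) ->
  forall u, Qpm s K L u ->
  (fun N => Deltas [seq a j | j <- enum 'I_k] (fun v => boxsum (term a s f v) N) u)
    @ \oo --> f u.
Proof.
elim: k => [|k IH] kA a ha u uQ.
  have -> : (fun N => Deltas [seq a j | j <- enum 'I_0]
                (fun v => boxsum (term a s f v) N) u) = fun _ => f u.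
    apply: funext => N; rewrite enum_ord0 /= /boxsum.
    rewrite (eq_bigr (fun _ => f u)); last first.
      move=> m _; rewrite term_E expr0 mul1r /yv !big_ord0 !mulr0 subrr mulr0.
      by rewrite sh0.
    by rewrite sumr_const card_ffun !card_ord expn0 mulr1n.
  exact: cvg_cst.
have kA' : k%:R < A by apply: lt_trans kA; rewrite ltr_nat.
set a' := fun j => a (lift ord0 j).
have ha' : forall j, 0 < a' j by move=> j; exact: ha.
set bs' := [seq a' j | j <- enum 'I_k].
have Emap : [seq a j | j <- enum 'I_k.+1] = a ord0 :: bs'.
  by rewrite enum_ordSl /= -map_comp.
set Phi := fun N => Deltas bs' (fun v => boxsum (term a' s f v) N).
have E N : Deltas [seq a j | j <- enum 'I_k.+1] (fun v => boxsum (term a s f v) N) u =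
    Phi N u - Phi N (u + (sg * (2 * pi * a ord0 * N%:R))%:C * 'i).
  rewrite Emap.
  change (Delta (a ord0) (Deltas bs' (fun v => boxsum (term a s f v) N)) u =
    Phi N u - Phi N (u + (sg * (2 * pi * a ord0 * N%:R))%:C * 'i)).
  rewrite boxsum_rec -/a'.
  have DS : forall v, Deltas bs' (fun x => (- sg)%:C * \sum_(i < N)
      boxsum (term a' s f (x + tsh (a ord0) i)) N) v =
      (- sg)%:C * \sum_(i < N) Phi N (v + tsh (a ord0) i).
    by move=> v; exact: Deltas_sum.
  have T := tele (Phi N) (a ord0) N u; rewrite /Delta /= in T.
  by rewrite /Delta !DS.
have -> : (fun N => Deltas [seq a j | j <- enum 'I_k.+1]
             (fun v => boxsum (term a s f v) N) u) =
          (fun N => Phi N u) - (fun N => Phi N (u + (sg * (2 * pi * a ord0 * N%:R))%:C * 'i)).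
  by apply: funext => N; rewrite E.
rewrite -[f u]subr0; apply: cvgB; first exact: IH.
apply: cvgC_intro => e e0; move: (far _ _ _ _ ha' kA' (ha ord0) (proj1 (proj1 (Qpm_iff u) uQ)) e e0).
apply: filterS => N; by rewrite sub0r cmodN.
Qed.

Lemma Deltas_lim (bs : seq R) (Gs : nat -> R[i] -> R[i]) (F : R[i] -> R[i]) (t : R) :
  all (fun b => 0 <= b) bs ->
  (forall x, Re x < - L -> t < sg * Im x -> (fun N => Gs N x) @ \oo --> F x) ->
  forall v, Re v < - L -> t + pi * \sum_(b <- bs) b < sg * Im v ->
  (fun N => Deltas bs (Gs N) v) @ \oo --> Deltas bs F v.
Proof.
move=> + hG; elim: bs => [|b bs IH] /=.
  by move=> _ v hRe; rewrite big_nil mulr0 addr0; exact: hG.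
case/andP=> b0 hbs v hRe hIm; rewrite big_cons in hIm.
have IH' := IH hbs.
have Sbs : 0 <= \sum_(b <- bs) b by rewrite big_seq; apply: sumr_ge0 => x /(allP hbs).
have hp := pi_gt0 R.
have pb : 0 <= pi * b by rewrite mulr_ge0 // ltW.
have h1 : (fun N => Deltas bs (Gs N) (v + 'i * (b * pi)%:C)) @ \oo -->
          Deltas bs F (v + 'i * (b * pi)%:C).
  apply: IH'; first by rewrite ReDi.
  rewrite ImDi mulrDr; move: hIm; rewrite mulrDr; case: sg_cases => ->; lra.
have h2 : (fun N => Deltas bs (Gs N) (v - 'i * (b * pi)%:C)) @ \oo -->
          Deltas bs F (v - 'i * (b * pi)%:C).
  apply: IH'; first by rewrite ReBi.
  rewrite ImBi mulrBr; move: hIm; rewrite mulrDr; case: sg_cases => ->; lra.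
exact: (cvgB h1 h2).
Qed.

Lemma main_all k (a : 'I_k -> R) : (forall j, 0 < a j) -> k%:R < A ->
  (forall u, Qpm s K L u ->
     cvgn (boxsum (term a s f u)) /\ cvgn (boxsum_abs (term a s f u))) /\
  (forall u, Qpm s K L u ->
     Deltas [seq a j | j <- enum 'I_k] (Fpm a s f) u = f u) /\
  (forall B : R, B < A - k%:R ->
     exists M' : R, forall u, Qpm s K L u ->
       cmod (Fpm a s f u) <= M' * cmod u `^ (- B)).
Proof.
move=> ha kA.
have S0 : 0 <= \sum_j a j by apply: sumr_ge0 => j _; exact: ltW.
have KK : K <= K + pi * \sum_j a j by rewrite lerDl mulr_ge0 ?pi_ge0.
split.
  move=> u /Qpm_iff [hRe hIm]; exact: (series_cvg _ _ _ _ ha (ltW hK) KK kA hRe hIm).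
split; last by move=> B BA; exact: Fpm_bound.
move=> u uQ; have [hRe hIm] := proj1 (Qpm_iff u) uQ.
set bs := [seq a j | j <- enum 'I_k].
have bs0 : all (fun b => 0 <= b) bs by apply/allP => x /mapP [j _ ->]; exact: ltW.
have h1 := Dk_ind k kA a ha u uQ.
have K0' : 0 <= K + pi * \sum_j a j by move: hK KK; lra.
have hconv : forall x, Re x < - L -> - K - pi * \sum_j a j < sg * Im x ->
    (fun N => boxsum (term a s f x) N) @ \oo --> Fpm a s f x.
  move=> x hx1 hx2.
  have hx2' : - (K + pi * \sum_j a j) < sg * Im x by rewrite opprD.
  exact: (series_cvg _ _ _ _ ha K0' (lexx _) kA hx1 hx2').1.
have Sbs : \sum_(b <- bs) b = \sum_j a j by rewrite big_map big_enum.
have hIm' : - K - pi * \sum_j a j + pi * \sum_(b <- bs) b < sg * Im u.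
  by rewrite Sbs; move: hIm; lra.
have h2 : (fun N => Deltas bs (fun v => boxsum (term a s f v) N) u) @ \oo -->
    Deltas bs (Fpm a s f) u :=
  Deltas_lim bs (fun N v => boxsum (term a s f v) N) (Fpm a s f) _ bs0 hconv u hRe hIm'.
by rewrite -(limC _ _ h1); exact: esym (limC _ _ h2).
Qed.
End Main.

Theorem lemma14 (R : realType) (k : nat) (a : 'I_k -> R) (K L A : R)
    (s : bool) (f : R[i] -> R[i]) :
  (forall j, 0 < a j) -> 0 < K -> 0 < L ->
  (* f holomorphic on Q_pm *)
  (forall z, Qpm s K L z -> derivable f z 1) ->
  (* |f(u)| <= M |u|^(-A) on Q_pm *)
  (exists M : R, forall u, Qpm s K L u -> cmod (f u) <= M * cmod u `^ (- A)) ->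
  k%:R < A ->
  (* the series converges (absolutely) at every u in Q_pm *)
  (forall u, Qpm s K L u ->
     cvgn (boxsum (term a s f u)) /\ cvgn (boxsum_abs (term a s f u))) /\
  (* difference equation Delta_{a_1,...,a_k} F_pm = f on Q_pm *)
  (forall u, Qpm s K L u ->
     Deltas [seq a j | j <- enum 'I_k] (Fpm a s f) u = f u) /\
  (* decay estimate *)
  (forall B : R, B < A - k%:R ->
     exists M' : R, forall u, Qpm s K L u ->
       cmod (Fpm a s f u) <= M' * cmod u `^ (- B)).
Proof.
move=> ha hK hL _ [M hM] kA.
have hA : 0 < A by apply: le_lt_trans kA; exact: ler0n.
have hM' : forall u, Qpm s K L u ->
    cmod (f u) <= Num.max M 0 * cmod u `^ (- A).
  move=> u hu; apply: (le_trans (hM u hu)); apply: ler_wpM2r; first exact: powR_ge0.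
  by rewrite le_max lexx.
have hM0 : 0 <= Num.max M 0 by rewrite le_max lexx orbT.
exact: (main_all _ _ _ _ _ _ hK hL hM0 hA hM' _ _ ha kA).
Qed.
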